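(* Let $A$ and $I$ be finite sets. In the group $\langle\mathcal P(I)\rangle^{\otimes A}$ one has $$\sum_{J\in\mathcal P(I)}(-1)^{|I|-|J|}\bigotimes_{a\in A}\langle J\rangle=\sum_{k\in\mathcal R(A,I)}\ \bigotimes_{a\in A}\ \sum_{J\in\mathcal P(k(a))}(-1)^{|k(a)|-|J|}\langle J\rangle.$$
   Context: $\mathcal P(I)$ is the set of all subsets of $I$; $\langle\mathcal P(I)\rangle$ is the free abelian group with basis $\{\langle J\rangle: J\in\mathcal P(I)\}$, and $\langle\mathcal P(I)\rangle^{\otimes A}$ is the tensor product over $\mathbb Z$ of copies of it indexed by $A$. $\mathcal R(A,I)$ is the set of functions $k\colon A\to\mathcal P(I)$ with $\bigcup_{a\in A}k(a)=I$. *)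

(* Defs.v *)
From HB Require Import structures.
From mathcomp Require Import all_boot all_order all_algebra.
Set Implicit Arguments. Unset Strict Implicit. Unset Printing Implicit Defensive.
Import GRing.Theory Num.Theory.
Local Open Scope ring_scope.

(* <P(I)> : free abelian group with basis {<J> : J subset of I}.
   Since P(I) is finite, it is the group of all functions {set I} -> int. *)
Notation FreeP I := {ffun {set I} -> int}.

Definition gen (I : finType) (J : {set I}) : FreeP I :=
  [ffun K => ((K == J) : nat)%:Z].

(* <P(I)>^{(x) A}: tensor product over Z of free abelian groups, modelled as the
   free abelian group on the product basis P(I)^A, i.e. functions
   {ffun A -> {set I}} -> int. *)
Notation TensP A I := {ffun {ffun A -> {set I}} -> int}.

Definition tens (A I : finType) (x : A -> FreeP I) : TensP A I :=
  [ffun k : {ffun A -> {set I}} => \prod_(a : A) x a (k a)].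

(* R(A,I): functions k : A -> P(I) with union_a k(a) = I *)
Definition covering (A I : finType) (k : {ffun A -> {set I}}) : bool :=
  \bigcup_(a : A) k a == [set: I].

(* Main.v *)
Require Import Defs.
From HB Require Import structures.
From mathcomp Require Import all_boot all_order all_algebra.
From mathcomp Require Import zify.
Import GRing.Theory Num.Theory.
Local Open Scope ring_scope.

Lemma core (I : finType) n : forall (L T : {set I}), (#|T| - #|L|)%N = n -> L \subset T ->
  \sum_(K : {set I} | (L \subset K) && (K \subset T)) (-1) ^+ (#|K| - #|L|)%N
  = ((L == T) : nat)%:Z :> int.
Proof.
elim: n => [|n IH] L T hn hLT.
  have eLT : L = T.
    apply/eqP; rewrite eqEcard hLT /=; lia.
  subst L; rewrite eqxx (eq_bigl (pred1 T)) ?big_pred1_eq ?subnn ?expr0 //.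
  by move=> K /=; rewrite eqEsubset andbC.
have : ~~ (T \subset L).
  apply/negP => hTL; have := subset_leq_card hTL; lia.
case/subsetPn => x xT xL.
rewrite (bigID (fun K : {set I} => x \in K)) /=.
have h1 : x |: L \subset T by rewrite subUset sub1set xT hLT.
have h2 : L \subset T :\ x by rewrite subsetD1 hLT xL.
have c1 : #|x |: L| = (#|L|.+1)%N by rewrite cardsU1 xL.
have c2 : #|T| = (#|T :\ x|.+1)%N by rewrite (cardsD1 x T) xT.
rewrite (eq_bigl (fun K : {set I} => (x |: L \subset K) && (K \subset T))); last first.
  by move=> K; rewrite subUset sub1set andbC andbA.
rewrite [X in _ + X](eq_bigl (fun K : {set I} => (L \subset K) && (K \subset T :\ x))); last first.
  by move=> K; rewrite subsetD1 andbA.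
rewrite (eq_bigr (fun K : {set I} => - (-1) ^+ (#|K| - #|x |: L|)%N)); last first.
  move=> K /andP [hK _]; have := subset_leq_card hK; rewrite c1 => hc.
  have -> : (#|K| - #|L| = (#|K| - (#|L|.+1)).+1)%N by lia.
  by rewrite exprS mulN1r.
rewrite sumrN IH; last 2 first.
- rewrite c1; lia.
- exact: h1.
rewrite IH; last 2 first.
- lia.
- exact: h2.
have -> : (L == T) = false.
  by apply/negP => /eqP e; rewrite e xT in xL.
have -> : (x |: L == T) = (L == T :\ x).
  apply/eqP/eqP => e.
  - by rewrite -e setU1K.
  - by rewrite e setD1K.
by rewrite addNr.
Qed.

Lemma core2 {I : finType} (L : {set I}) :
  \sum_(S : {set I} | L \subset S) (-1) ^+ (#|[set: I]| - #|S|)%N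
  = ((L == setT) : nat)%:Z :> int.
Proof.
rewrite (eq_bigr (fun S : {set I} => (-1) ^+ (#|[set: I]| - #|L|)%N * (-1) ^+ (#|S| - #|L|)%N)).
  rewrite -big_distrr /=.
  rewrite (eq_bigl (fun S : {set I} => (L \subset S) && (S \subset setT))); last first.
    by move=> S; rewrite subsetT andbT.
  rewrite (@core _ _ _ _ erefl) ?subsetT //.
  case: eqP => [->|_]; last by rewrite mulr0.
  by rewrite subnn expr0 mulr1.
move=> S hS; have hc := subset_leq_card hS; have hT := subset_leq_card (subsetT S).
rewrite (_ : (#|[set: I]| - #|L| = (#|[set: I]| - #|S|) + (#|S| - #|L|))%N); last by lia.
by rewrite exprD -mulrA -expr2 sqrr_sign mulr1.
Qed.

Definition gfun {I : finType} (K L : {set I}) : int :=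
  if L \subset K then (-1) ^+ (#|K| - #|L|)%N else 0.

Lemma hg {I : finType} (K L : {set I}) :
  \sum_(J : {set I} | J \subset K) (gen J L *~ (-1) ^+ (#|K| - #|J|)%N) = gfun K L.
Proof.
rewrite /gfun; case: ifP => hL.
  rewrite (bigD1 L) //= big1 ?addr0.
    by rewrite ffunE eqxx mulrzz mul1r.
  move=> J /andP [_ hJ]; rewrite ffunE.
  by case: eqP => [e|_]; [rewrite -e eqxx in hJ | rewrite mul0rz].
apply: big1 => J hJ; rewrite ffunE.
by case: eqP => [e|_]; [rewrite e hJ in hL | rewrite mul0rz].
Qed.

Theorem lemma15p1 (A I : finType) :
  \sum_(J : {set I}) (tens (fun _ : A => gen J) *~ (-1) ^+ (#|[set: I]| - #|J|)%N)
  = \sum_(k : {ffun A -> {set I}} | covering k)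
      tens (fun a : A =>
        \sum_(J : {set I} | J \subset k a) (gen J *~ (-1) ^+ (#|k a| - #|J|)%N)).
Proof.
apply/ffunP => k0; rewrite !sum_ffunE.
have E : forall k : {ffun A -> {set I}},
    (tens (fun a : A =>
        \sum_(J : {set I} | J \subset k a) (gen J *~ (-1) ^+ (#|k a| - #|J|)%N))) k0
    = \prod_(a : A) gfun (k a) (k0 a).
  move=> k; rewrite ffunE; apply: eq_bigr => a _; rewrite sum_ffunE -hg.
  by apply: eq_bigr => J _; rewrite ffunMzE.
rewrite (eq_bigr _ (fun k _ => E k)) [RHS]big_mkcond /=.
rewrite (eq_bigr (fun k : {ffun A -> {set I}} =>
   \sum_(S : {set I} | \bigcup_(a : A) k a \subset S)
      (-1) ^+ (#|[set: I]| - #|S|)%N * \prod_(a : A) gfun (k a) (k0 a))); last first.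
  move=> k _; rewrite -big_distrl /= core2 /covering.
  by case: ifP => _; rewrite ?mul1r ?mul0r.
rewrite (exchange_big_dep xpredT) //=.
apply: eq_bigr => S _.
rewrite ffunMzE mulrzz -big_distrr /= mulrC; congr (_ * _).
rewrite (eq_bigl (fun k : {ffun A -> {set I}} =>
   k \in family (fun a : A => ((fun K : {set I} => K \subset S) : pred {set I})))); last first.
  move=> k /=; apply/bigcupsP/familyP => h a.
    exact: h.
  by move=> _; exact: h a.
rewrite -(@bigA_distr_big_dep int 0 1 *%R +%R A {set I} (fun _ K => K \subset S) (fun a K => gfun K (k0 a))) /= ffunE.
apply: eq_bigr => a _.
rewrite /gfun -big_mkcondr /=.
case hS: (k0 a \subset S).
  rewrite (eq_bigl (fun K : {set I} => (k0 a \subset K) && (K \subset S))); last first.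
    by move=> K; rewrite andbC.
  by rewrite (@core _ _ _ _ erefl) // ffunE.
rewrite big1 ?ffunE.
  by case: eqP => // e; rewrite e subxx in hS.
move=> K /andP [h1 h2]; have := subset_trans h2 h1; by rewrite hS.
Qed.
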